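(* Let $U_3=(|0\rangle\langle0|\otimes I_2+|1\rangle\langle1|\otimes\sigma_1)\otimes I_2-2\,|1\rangle\langle1|\otimes|0\rangle\langle1|\otimes|1\rangle\langle1|$ and $U_6=(T_{AC}\otimes (I_2)_B)(H\otimes I_2\otimes I_2)U_3$, which equals $$\tfrac{1}{\sqrt2}\Big[|0\rangle\langle0|\otimes I_2\otimes I_2+|0\rangle\langle1|\otimes(\sigma_1\otimes I_2-2|0\rangle\langle1|\otimes|1\rangle\langle1|)+|1\rangle\langle0|\otimes I_2\otimes\sigma_1+|1\rangle\langle1|\otimes(2|0\rangle\langle1|\otimes|0\rangle\langle1|-\sigma_1\otimes\sigma_1)\Big].$$ Then $\mathrm{sr}(U_6)=6$.
   Context: $I_2$ is the $2\times 2$ identity, $\sigma_1=\begin{bmatrix}0&1\\1&0\end{bmatrix}$, $H=\frac{1}{\sqrt2}\begin{bmatrix}1&1\\1&-1\end{bmatrix}$, $\{|0\rangle,|1\rangle\}$ the standard basis of $\mathbb{C}^2$. $T=|0\rangle\langle0|\otimes I_2+|1\rangle\langle1|\otimes\sigma_1$ is the CNOT gate; $T_{AC}\otimes(I_2)_B$ denotes $T$ with control qubit $A$ and target qubit $C$, acting as identity on $B$. Tensor factors are ordered $A\otimes B\otimes C$. For a matrix $U$ on $\mathbb{C}^2\otimes\mathbb{C}^2\otimes\mathbb{C}^2$ (systems $A,B,C$), its Schmidt rank $\mathrm{sr}(U)$ is the least integer $r$ such that $U=\sum_{j=1}^r A_j\otimes B_j\otimes C_j$ with $A_j,B_j,C_j$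 complex $2\times 2$ matrices (i.e. the tensor rank of $U$). *)

(* Defs.v *)
From mathcomp Require Import all_boot all_algebra all_field.
From mathcomp Require Import mxtens.
Set Implicit Arguments. Unset Strict Implicit. Unset Printing Implicit Defensive.
Import GRing.Theory Num.Theory.
Local Open Scope ring_scope.

(* Complex scalars: algC (algebraically closed field of characteristic 0 with
   conjugation; all entries here are algebraic). Tensor (Kronecker) product
   [A *t B] from mathcomp.real_closed.mxtens, row index (i,j) |-> i*n + j, so
   A *t B *t C is ordered A (x) B (x) C as in the paper. *)

Notation "A *t B" := (tensmx A B) (at level 40, left associativity).

Definition ketbra (i j : 'I_2) : 'M[algC]_2 := delta_mx i j.
Definition e00 := ketbra 0 0.
Definition e01 := ketbra 0 1.
Definition e10 := ketbra 1 0.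
Definition e11 := ketbra 1 1.

Definition I2 : 'M[algC]_2 := 1%:M.
Definition sigma1 : 'M[algC]_2 := e01 + e10.
Definition Hadamard : 'M[algC]_2 :=
  (sqrtC 2)^-1 *: \matrix_(i < 2, j < 2) (if (i == 1) && (j == 1) then -1 else 1).

Definition CNOT : 'M[algC]_(2 * 2) := e00 *t I2 + e11 *t sigma1.

Definition CNOT_AC : 'M[algC]_(2 * 2 * 2) :=
  e00 *t I2 *t I2 + e11 *t I2 *t sigma1.

Definition U3 : 'M[algC]_(2 * 2 * 2) :=
  CNOT *t I2 - 2%:R *: (e11 *t e01 *t e11).

Definition U6 : 'M[algC]_(2 * 2 * 2) :=
  CNOT_AC *m (Hadamard *t I2 *t I2) *m U3.

Definition has_product_decomp (U : 'M[algC]_(2 * 2 * 2)) (r : nat) : Prop :=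
  exists (A B C : 'I_r -> 'M[algC]_2), U = \sum_(j < r) (A j *t B j *t C j).

Definition schmidt_rank_is (U : 'M[algC]_(2 * 2 * 2)) (r : nat) : Prop :=
  has_product_decomp U r /\ forall r', has_product_decomp U r' -> (r <= r')%N.

(* Main.v *)
Require Import Defs.
From mathcomp Require Import all_boot all_algebra all_field.
From mathcomp Require Import mxtens.
Import GRing.Theory Num.Theory.
Local Open Scope ring_scope.
From mathcomp Require Import ring.
Set Implicit Arguments. Unset Strict Implicit. Unset Printing Implicit Defensive.

Lemma tensmxDl m n p q (A B : 'M[algC]_(m,n)) (C : 'M[algC]_(p,q)) :
  (A + B) *t C = A *t C + B *t C.
Proof. by apply/matrixP=> i j; rewrite !mxE mulrDl. Qed.
Lemma tensmxDr m n p q (A : 'M[algC]_(m,n)) (B C : 'M[algC]_(p,q)) :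
  A *t (B + C) = A *t B + A *t C.
Proof. by apply/matrixP=> i j; rewrite !mxE mulrDr. Qed.
Lemma tensmxZl m n p q a (A : 'M[algC]_(m,n)) (C : 'M[algC]_(p,q)) :
  (a *: A) *t C = a *: (A *t C).
Proof. by apply/matrixP=> i j; rewrite !mxE mulrA. Qed.

Definition h : algC := (sqrtC 2%:R)^-1.

Lemma ord2P (i : 'I_2) : i = 0 \/ i = 1.
Proof. case: i => [[|[|//]]] Hi; [left|right]; exact: val_inj. Qed.

Ltac mx2 := let i := fresh "i" in let j := fresh "j" in
  apply/matrixP=> i j; case: (ord2P i) => ->; case: (ord2P j) => ->;
  rewrite /e00 /e01 /e10 /e11 /ketbra /sigma1 /I2 ?(mxE, big_ord_recl, big_ord0) /=; ring.

Lemma iA1 : e00 *m Hadamard *m e00 = h *: e00.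
Proof. rewrite /Hadamard /h. mx2. Qed.
Lemma iA2 : e00 *m Hadamard *m e11 = h *: e01.
Proof. rewrite /Hadamard /h. mx2. Qed.
Lemma iA3 : e00 *m Hadamard *m (- (2%:R *: e11)) = (- (2%:R * h)) *: e01.
Proof. rewrite /Hadamard /h. mx2. Qed.
Lemma iA4 : e11 *m Hadamard *m e00 = h *: e10.
Proof. rewrite /Hadamard /h. mx2. Qed.
Lemma iA5 : e11 *m Hadamard *m e11 = (- h) *: e11.
Proof. rewrite /Hadamard /h. mx2. Qed.
Lemma iA6 : e11 *m Hadamard *m (- (2%:R *: e11)) = (2%:R * h) *: e11.
Proof. rewrite /Hadamard /h. mx2. Qed.
Lemma iC : sigma1 *m I2 *m e11 = e01.
Proof. mx2. Qed.

Definition A0 (j : 'I_6) : 'M[algC]_2 :=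
  nth 0 [:: h *: e00; h *: e01; (- (2%:R * h)) *: e01; h *: e10; (- h) *: e11; (2%:R * h) *: e11] j.
Definition B0 (j : 'I_6) : 'M[algC]_2 := nth 0 [:: I2; sigma1; e01; I2; sigma1; e01] j.
Definition C0 (j : 'I_6) : 'M[algC]_2 := nth 0 [:: I2; I2; e11; sigma1; sigma1; e01] j.

Lemma tensmxNl m n p q (A : 'M[algC]_(m,n)) (C : 'M[algC]_(p,q)) :
  (- A) *t C = - (A *t C).
Proof. by apply/matrixP=> i j; rewrite !mxE mulNr. Qed.

Lemma U6_decomp : U6 = \sum_(j < 6) (A0 j *t B0 j *t C0 j).
Proof.
have U3E : U3 = e00 *t I2 *t I2 + e11 *t sigma1 *t I2 + (- (2%:R *: e11)) *t e01 *t e11.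
  by rewrite /U3 /CNOT !tensmxDl !tensmxNl !tensmxZl.
rewrite /U6 U3E /CNOT_AC !mulmxDl !mulmxDr !tensmx_mul.
rewrite iA1 iA2 iA3 iA4 iA5 iA6 iC /I2 !mul1mx !mulmx1.
rewrite !big_ord_recl big_ord0 /= /A0 /B0 /C0 /= /I2 addr0 !addrA.
done.
Qed.

Definition idx3 (i1 i2 i3 : 'I_2) : 'I_(2 * 2 * 2) := mxtens_index (mxtens_index (i1, i2), i3).

Lemma sum_entry r (A B C : 'I_r -> 'M[algC]_2) i1 i2 i3 k1 k2 k3 :
  (\sum_(j < r) (A j *t B j *t C j)) (idx3 i1 i2 i3) (idx3 k1 k2 k3)
  = \sum_(j < r) A j i1 k1 * B j i2 k2 * C j i3 k3.
Proof. rewrite summxE; apply: eq_bigr => j _; by rewrite !tensmxE. Qed.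

Lemma rank_sum_le r m n (M : 'I_r -> 'M[algC]_(m, n)) :
  (\rank (\sum_(j < r) M j)%R <= \sum_(j < r) \rank (M j))%N.
Proof.
elim: r M => [|r IH] M; first by rewrite !big_ord0 mxrank0.
rewrite !big_ord_recr /=; apply: leq_trans (mxrank_add _ _) _.
by rewrite leq_add2r; exact: IH.
Qed.

Lemma h_neq0 : h != 0.
Proof. by rewrite /h invr_eq0 sqrtC_eq0 pnatr_eq0. Qed.

Lemma count2 r (j1 j2 : 'I_r) : j1 != j2 ->
  (\sum_(j < r) ((j != j1) && (j != j2)) + 2 = r)%N.
Proof.
move=> j12.
have e1 : forall k : 'I_r, (\sum_(j < r) (j == k) = 1)%N.
  move=> k; rewrite (bigD1 k) //= eqxx big1 ?addn0 // => j /negbTE ->. by [].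
have H : (\sum_(j < r) ((j != j1) && (j != j2) + (j == j1) + (j == j2)) = \sum_(j < r) 1)%N.
  apply: eq_bigr => j _.
  case: (eqVneq j j1) => [->|n1]; case: (eqVneq j j2) => [E|n2] //=.
  all: rewrite ?(negbTE j12) //.
rewrite !big_split /= !e1 sum1_card card_ord in H.
by apply: etrans H; rewrite -addnA.
Qed.

Ltac ev := rewrite /A0 /B0 /C0 !big_ord_recl !big_ord0 /= /e00 /e01 /e10 /e11 /ketbra /sigma1 /I2 ?mxE /=.

Lemma lower r (A B C : 'I_r -> 'M[algC]_2) :
  U6 = \sum_(j < r) (A j *t B j *t C j) -> (6 <= r)%N.
Proof.
move=> hU.
have SE : forall i1 k1 i2 k2 i3 k3,
  \sum_(j < r) A j i1 k1 * B j i2 k2 * C j i3 k3 =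
  \sum_(j < 6) A0 j i1 k1 * B0 j i2 k2 * C0 j i3 k3.
  by move=> i1 k1 i2 k2 i3 k3; rewrite -!sum_entry -hU U6_decomp.
pose P j := C j 0 1 - C j 1 0.
pose Q j := C j 1 1 - C j 0 0.
have [j1 [j2 dn0]] : exists j1 j2, P j1 * Q j2 - Q j1 * P j2 != 0.
  case: (boolP [exists j1, exists j2, P j1 * Q j2 - Q j1 * P j2 != 0]).
    by case/existsP => j1 /existsP [j2 H]; exists j1, j2.
  move/existsPn => H0.
  have H1 : forall j k, P j * Q k - Q j * P k = 0.
    move=> j k; move/existsPn: (H0 j) => /(_ k); by rewrite negbK => /eqP.
  pose w1 j := A j 0 1 * B j 0 1.
  pose w2 j := A j 1 1 * B j 0 1.
  have s1 : \sum_j w1 j * P j = 0.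
    rewrite (eq_bigr (fun j => A j 0 1 * B j 0 1 * C j 0 1 - A j 0 1 * B j 0 1 * C j 1 0)); last first.
      by move=> j _; rewrite /w1 /P; ring.
    rewrite sumrB !SE; ev; ring.
  have s2 : \sum_j w1 j * Q j = - (2%:R * h).
    rewrite (eq_bigr (fun j => A j 0 1 * B j 0 1 * C j 1 1 - A j 0 1 * B j 0 1 * C j 0 0)); last first.
      by move=> j _; rewrite /w1 /Q; ring.
    rewrite sumrB !SE; ev; ring.
  have s3 : \sum_j w2 j * P j = 2%:R * h.
    rewrite (eq_bigr (fun j => A j 1 1 * B j 0 1 * C j 0 1 - A j 1 1 * B j 0 1 * C j 1 0)); last first.
      by move=> j _; rewrite /w2 /P; ring.
    rewrite sumrB !SE; ev; ring.
  have s4 : \sum_j w2 j * Q j = 0.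
    rewrite (eq_bigr (fun j => A j 1 1 * B j 0 1 * C j 1 1 - A j 1 1 * B j 0 1 * C j 0 0)); last first.
      by move=> j _; rewrite /w2 /Q; ring.
    rewrite sumrB !SE; ev; ring.
  have key : (\sum_j w1 j * P j) * (\sum_k w2 k * Q k) - (\sum_j w1 j * Q j) * (\sum_k w2 k * P k) = 0.
    rewrite !big_distrlr /= -sumrB; apply: big1 => j _.
    rewrite -sumrB; apply: big1 => k _.
    transitivity (w1 j * w2 k * (P j * Q k - Q j * P k)); first by ring.
    by rewrite H1 mulr0.
  move: key; rewrite s1 s2 s3 s4 => /eqP.
  have : (2%:R * h) * (2%:R * h) != 0 :> algC.
    by rewrite mulf_neq0 // mulf_neq0 ?h_neq0 // pnatr_eq0.
  move=> nz /eqP E; case/negP: nz; apply/eqP.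
  transitivity (0 * 0 - - (2%:R * h) * (2%:R * h)); [ring | exact: E].
set d := P j1 * Q j2 - Q j1 * P j2.
have j12 : j1 != j2.
  apply: contraNneq dn0 => E; rewrite /d E; apply/eqP; ring.
pose ia : seq 'I_2 := [:: 0; 0; 1; 1].
pose ka : seq 'I_2 := [:: 0; 1; 0; 1].
pose gbl : seq 'I_2 := [:: 0; 1; 0; 1].
pose fcl : seq 'I_2 := [:: 0; 0; 1; 1].
pose F j (c : 'I_4) := C j (nth 0 fcl c) 0.
pose al (c : 'I_4) := F j1 c * Q j2 - Q j1 * F j2 c.
pose be (c : 'I_4) := F j1 c * P j2 - P j1 * F j2 c.
pose psi j c := d * F j c - P j * al c + Q j * be c.
have psi1 : forall c, psi j1 c = 0 by move=> c; rewrite /psi /al /be /d; ring.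
have psi2 : forall c, psi j2 c = 0 by move=> c; rewrite /psi /al /be /d; ring.
pose colv j : 'cV[algC]_4 := \col_(e < 4) A j (nth 0 ia e) (nth 0 ka e).
pose rowv j : 'rV[algC]_4 := \row_(c < 4) (B j (nth 0 gbl c) 0 * psi j c).
pose W := (\sum_(j < r) colv j *m rowv j)%R.
have rk1 : forall j, (\rank (colv j *m rowv j) <= (j != j1) && (j != j2))%N.
  move=> j; case: (eqVneq j j1) => [->|n1] /=.
    have -> : rowv j1 = 0 by apply/matrixP=> i c; rewrite !mxE psi1 mulr0.
    by rewrite mulmx0 mxrank0.
  case: (eqVneq j j2) => [->|n2] /=.
    have -> : rowv j2 = 0 by apply/matrixP=> i c; rewrite !mxE psi2 mulr0.
    by rewrite mulmx0 mxrank0.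
  have h1 := mxrankM_maxl (colv j) (rowv j). have h2 := rank_leq_col (colv j). exact (leq_trans h1 h2).
have rkW : (\rank W <= \sum_(j < r) ((j != j1) && (j != j2)))%N.
  have h1 := rank_sum_le (fun j => colv j *m rowv j).
  have h2 : (\sum_(j < r) \rank (colv j *m rowv j) <= \sum_(j < r) ((j != j1) && (j != j2)))%N.
    by apply: leq_sum => j _; exact: rk1.
  exact (leq_trans h1 h2).
pose v := \row_(c < 4) (if nat_of_ord c == 3%N then -1 else 1 : algC).
have WE : W = (d * h) *: diag_mx v.
  apply/matrixP=> e c.
  have -> : W e c = \sum_(j < r) A j (nth 0 ia e) (nth 0 ka e) * (B j (nth 0 gbl c) 0 * psi j c).
    rewrite summxE; apply: eq_bigr => j _; by rewrite !mxE big_ord1 !mxE.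
  set a := nth 0 ia e; set k := nth 0 ka e; set g := nth 0 gbl c; set f := nth 0 fcl c.
  have -> : \sum_(j < r) A j a k * (B j g 0 * psi j c) =
     d * (\sum_(j < r) A j a k * B j g 0 * C j f 0)
     - al c * ((\sum_(j < r) A j a k * B j g 0 * C j 0 1) - (\sum_(j < r) A j a k * B j g 0 * C j 1 0))
     + be c * ((\sum_(j < r) A j a k * B j g 0 * C j 1 1) - (\sum_(j < r) A j a k * B j g 0 * C j 0 0)).
    rewrite -!sumrB !mulr_sumr -sumrB -big_split /=; apply: eq_bigr => j _.
    rewrite /psi /P /Q /F; ring.
  rewrite !SE /a /k /g /f; clear a k g f.
  case: e => [[|[|[|[|//]]]] ?]; case: c => [[|[|[|[|//]]]] ?]; ev; ring.
have rW : \rank W = 4%N.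
  rewrite WE mxrank_scale_nz; last by rewrite mulf_neq0 // h_neq0.
  apply: mxrank_unit; rewrite unitmxE det_diag unitfE.
  rewrite !big_ord_recl big_ord0 !mxE /=.
  by rewrite !mul1r mulr1 oppr_eq0 oner_eq0.
have := count2 j12.
move: rkW; rewrite rW => le4 <-.
by rewrite -(leq_add2r 2) in le4.
Qed.

Theorem mainTheorem16 : schmidt_rank_is U6 6.
Proof.
split; first by exists A0, B0, C0; exact: U6_decomp.
by move=> r' [A [B [C hU]]]; exact: lower hU.
Qed.
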